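(* Let $d\ge1$, let $Z$ be a simple $d$-cycle and $D\subseteq\mathrm{Supp}(Z)$. Suppose that deleting the vertices corresponding to $D$ from $G_d(Z)$ leaves a graph with $m>1$ connected components. Then there exist $(d-1)$-cycles $C_1,\dots,C_m$ supported on $K(D)$ such that (a) any two of them have disjoint supports; and (b) any $m-1$ of them are linearly independent modulo the space $\mathcal B_{d-1}(K(D))$ of $(d-1)$-boundaries of $K(D)$, while all $m$ of them are linearly dependent modulo $\mathcal B_{d-1}(K(D))$.
   Context: Fix a field $\mathbb F$. A $d$-simplex is a $(d+1)$-element subset of $[n]$ oriented by increasing order $s_1<\dots<s_{d+1}$. A $d$-chain is a formal $\mathbb F$-combination of $d$-simplices; its support is the set of simplices with nonzero coefficient, and it is supported on a complex $K$ if its support lies in $K$. $\partial\sigma=\sum_i(-1)^{i-1}(\sigma\setminus\{s_i\})$, extended linearly. A $d$-cycle is a chain with $\partial Z=0$; it is simple if $Z\ne0$ and every $d$-cycle supported in $\mathrm{Supp}(Z)$ is a scalar multiple of $Z$. For a set $S$ of simplices, $K(S)$ is the complex of all subsets of members of $S$. $\mathcal B_{d-1}(K)=\{\partial B: B \text{ a } d\text{-chain supported on } K\}$. The facet graph $G_d(Z)$ has vertex set $\mathrm{Supp}(Z)$, two $d$-simplices adjacent iff they share a $(d-1)$-face. *)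

(* Defs.v *)
From HB Require Import structures.
From mathcomp Require Import all_boot all_order all_algebra.
Set Implicit Arguments. Unset Strict Implicit. Unset Printing Implicit Defensive.
Import Order.TTheory GRing.Theory.
Local Open Scope ring_scope.

(* Vertex set [n] is modelled by 'I_n; a simplex is a finite subset of 'I_n;
   a d-simplex is one with d+1 elements, oriented by increasing order. *)
Definition simplex (n : nat) := {set 'I_n}.

Notation chain F n := {ffun {set 'I_n} -> F^o}.

Definition supp (F : fieldType) (n : nat) (c : chain F n) : {set {set 'I_n}} :=
  [set s | c s != 0].

Definition is_dchain (F : fieldType) (n d : nat) (c : chain F n) : Prop :=
  forall s, c s != 0 -> #|s| = d.+1.

(* boundary: d sigma = sum_i (-1)^(i-1) (sigma \ s_i); the removed vertex v
   has 0-based position #|{x in sigma | x < v}|. Extended linearly. *)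
Definition bd (F : fieldType) (n : nat) (c : chain F n) : chain F n :=
  [ffun t : {set 'I_n} =>
     \sum_(s : {set 'I_n}) \sum_(v in s | s :\ v == t)
        (-1) ^+ #|[set x in s | (x < v)%N]| * c s].

Definition is_dcycle (F : fieldType) (n d : nat) (c : chain F n) : Prop :=
  is_dchain d c /\ bd c = 0.

Definition simple_dcycle (F : fieldType) (n d : nat) (Z : chain F n) : Prop :=
  [/\ is_dcycle d Z, Z != 0 &
      forall W : chain F n, is_dcycle d W -> supp W \subset supp Z ->
        exists a : F, W = a *: Z].

Definition cplx (n : nat) (S : {set {set 'I_n}}) : {set {set 'I_n}} :=
  [set t : {set 'I_n} | [exists s in S, t \subset s]].

Definition supported_on (F : fieldType) (n : nat) (c : chain F n)
  (K : {set {set 'I_n}}) : Prop := supp c \subset K.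

Definition in_boundaries (F : fieldType) (n d : nat) (K : {set {set 'I_n}})
  (c : chain F n) : Prop :=
  exists B : chain F n, [/\ is_dchain d B, supported_on B K & bd B = c].

(* Facet graph G_d(Z) with the vertices of D deleted: vertex set Supp(Z) \ D,
   two d-simplices adjacent iff distinct and sharing a (d-1)-face,
   i.e. their intersection has d elements. *)
Definition facet_rel_del (F : fieldType) (n d : nat) (Z : chain F n)
  (D : {set {set 'I_n}}) : rel {set 'I_n} :=
  fun s t => [&& s \in supp Z :\: D, t \in supp Z :\: D, s != t &
                 #|s :&: t| == d].

Definition ncomp_del (F : fieldType) (n d : nat) (Z : chain F n)
  (D : {set {set 'I_n}}) : nat :=
  n_comp (facet_rel_del d Z D) (mem (supp Z :\: D)).

(* Main.v *)
Require Import Defs.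
From HB Require Import structures.
From mathcomp Require Import all_boot all_order all_algebra.
Import GRing.Theory.
Local Open Scope ring_scope.

Set Implicit Arguments. Unset Strict Implicit. Unset Printing Implicit Defensive.


Section Bd.
Variables (F : fieldType) (n : nat).
Implicit Types (c : chain F n) (s t : {set 'I_n}).

Definition sg s (v : 'I_n) : F := (-1) ^+ #|[set x in s | (x < v)%N]|.

Lemma bdE c t : bd c t = \sum_(s : {set 'I_n}) (\sum_(v in s | s :\ v == t) sg s v) * c s.
Proof. by rewrite ffunE; apply: eq_bigr => s _; rewrite mulr_suml. Qed.

Lemma bdD c1 c2 : bd (c1 + c2) = bd c1 + bd c2.
Proof.
apply/ffunP => t; rewrite [in RHS]ffunE !bdE -big_split /=; apply: eq_bigr => s _.
by rewrite ffunE mulrDr.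
Qed.

Lemma bdZ (a : F) c : bd (a *: c) = a *: bd c.
Proof.
apply/ffunP => t; rewrite [in RHS]ffunE !bdE /=.
rewrite [in RHS]/GRing.scale /= mulr_sumr; apply: eq_bigr => s _.
by rewrite ffunE /GRing.scale /= mulrCA.
Qed.

Lemma bd0 : bd (0 : chain F n) = 0.
Proof. by apply/ffunP => t; rewrite bdE [RHS]ffunE; apply: big1 => s _; rewrite ffunE mulr0. Qed.

Lemma bdN c : bd (- c) = - bd c.
Proof. by rewrite -scaleN1r bdZ scaleN1r. Qed.

Lemma bdB c1 c2 : bd (c1 - c2) = bd c1 - bd c2.
Proof. by rewrite bdD bdN. Qed.

Lemma bd_sum (I : finType) (P : pred I) (f : I -> chain F n) :
  bd (\sum_(i | P i) f i) = \sum_(i | P i) bd (f i).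
Proof. elim/big_rec2: _ => [|i x y _ IH]; first exact: bd0. by rewrite bdD IH. Qed.

Lemma bd_supp c t : bd c t != 0 ->
  exists (s : {set 'I_n}) (v : 'I_n), [/\ v \in s, s :\ v = t & c s != 0].
Proof.
move=> H.
have [/existsP [s /existsP [v /and3P [vs /eqP svt cs]]]|N] :=
  boolP [exists s : {set 'I_n}, exists v : 'I_n, [&& v \in s, s :\ v == t & c s != 0]].
  by exists s, v.
exfalso; move/negP: H; apply; rewrite ffunE; apply/eqP.
apply: big1 => s _; apply: big1 => v /andP [vs svt].
have [->|cs] := eqVneq (c s) 0; first by rewrite mulr0.
by move/negP: N; case; apply/existsP; exists s; apply/existsP; exists v;
  rewrite vs svt cs.
Qed.

End Bd.


Section BdBd.
Variables (F : fieldType) (n : nat).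
Implicit Types (c : chain F n) (s t : {set 'I_n}).

Lemma sg_swap s (v w : 'I_n) : v \in s -> w \in s -> (v < w)%N ->
  sg F (s :\ w) v * sg F s w = - (sg F (s :\ v) w * sg F s v).
Proof.
move=> vs ws vw.
have E1 : #|[set x in s :\ w | (x < v)%N]| = #|[set x in s | (x < v)%N]|.
  apply: eq_card => x; rewrite !inE; case xv: (x < v)%N; last by rewrite !andbF.
  rewrite !andbT; case: (x =P w) => [xw|]; last by [].
  by move: xv; rewrite xw => /(ltn_trans vw); rewrite ltnn.
have E2 : #|[set x in s | (x < w)%N]| = #|[set x in s :\ v | (x < w)%N]|.+1.
  have -> : [set x in s | (x < w)%N] = v |: [set x in s :\ v | (x < w)%N].
    apply/setP => x; rewrite !inE; case: (x =P v) => [->|]; by rewrite ?vs ?vw.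
  by rewrite cardsU1 !inE eqxx.
by rewrite /sg E1 E2 exprS mulN1r mulrN mulrC.
Qed.

Lemma K0 s t : \sum_(v in s) \sum_(w in s :\ v | (s :\ v) :\ w == t)
   sg F (s :\ v) w * sg F s v = 0.
Proof.
pose g (v w : 'I_n) := if [&& v \in s, w \in s :\ v & (s :\ v) :\ w == t]
  then sg F (s :\ v) w * sg F s v else 0.
have -> : \sum_(v in s) \sum_(w in s :\ v | (s :\ v) :\ w == t)
   sg F (s :\ v) w * sg F s v = \sum_v \sum_w g v w.
  rewrite big_mkcond; apply: eq_bigr => v _ /=.
  case: ifP => vs; last by rewrite big1 // => w _; rewrite /g vs.
  rewrite big_mkcond; apply: eq_bigr => w _ /=; rewrite /g vs /=.
  by rewrite in_setD1; case: (w \in s); rewrite ?andbF ?andbT.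
have gsw (v w : 'I_n) : (v < w)%N -> g w v = - g v w.
  move=> vw; rewrite /g.
  have -> : (s :\ w) :\ v = (s :\ v) :\ w by rewrite !setDDl setUC.
  have nvw : (v != w) by apply: contraTneq vw => ->; rewrite ltnn.
  have h1 : (v \in s :\ w) = (v \in s).
    by rewrite in_setD1; case: (v \in s); rewrite ?andbF ?andbT //; exact: nvw.
  have h2 : (w \in s :\ v) = (w \in s).
    by rewrite in_setD1; case: (w \in s); rewrite ?andbF ?andbT //; rewrite eq_sym; exact: nvw.
  rewrite h1 h2.
  case vs: (v \in s); case ws: (w \in s) => //=; rewrite ?oppr0 //.
  by case: ifP; rewrite ?oppr0 // => _; rewrite sg_swap.
have split_g (v w : 'I_n) : g v w = (if (v < w)%N then g v w else 0) + (if (w < v)%N then g v w else 0).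
  case: (ltngtP v w) => H; rewrite ?addr0 ?add0r //.
  have -> : v = w by apply: val_inj.
  by rewrite /g in_setD1 eqxx /= andbF.
under eq_bigr => v _ do under eq_bigr => w _ do rewrite split_g.
under eq_bigr => v _ do rewrite big_split /=.
rewrite big_split /= [X in _ + X]exchange_big /=.
rewrite -big_split /=; apply: big1 => v _; rewrite -big_split /=.
apply: big1 => w _; case: ltngtP => H; rewrite ?addr0 ?add0r //. by rewrite (gsw v w H) addrN.
Qed.

Lemma bdbd c : bd (bd c) = 0.
Proof.
apply/ffunP => t; rewrite bdE [RHS]ffunE.
under eq_bigr => s' _ do rewrite bdE mulr_sumr.
rewrite exchange_big /=; apply: big1 => s _.
have -> : \sum_(s' : {set 'I_n}) (\sum_(w in s' | s' :\ w == t) sg F s' w) *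
   ((\sum_(v in s | s :\ v == s') sg F s v) * c s) =
  (\sum_(v in s) \sum_(w in s :\ v | (s :\ v) :\ w == t)
   sg F (s :\ v) w * sg F s v) * c s.
  rewrite mulr_suml.
  under eq_bigr => s' _ do rewrite mulrA mulr_sumr mulr_suml.
  rewrite (exchange_big_dep (mem s)) /=; last by move=> s' v _ /andP [].
  apply: eq_bigr => v vs.
  rewrite (big_pred1 (s :\ v)); last by move=> s'; rewrite /= vs eq_sym.
  by rewrite -!mulr_suml.
by rewrite K0 mul0r.
Qed.

End BdBd.

Unset Implicit Arguments. Set Strict Implicit.


Theorem lemma5p1 (F : fieldType) (n d : nat) (Z : chain F n)
  (D : {set {set 'I_n}}) (m : nat) :
  (1 <= d)%N -> simple_dcycle d Z -> D \subset supp Z ->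
  ncomp_del d Z D = m -> (1 < m)%N ->
  exists C : 'I_m -> chain F n,
    [/\ (forall i, is_dcycle d.-1 (C i) /\ supported_on (C i) (cplx D)),
        (forall i j, i != j -> [disjoint supp (C i) & supp (C j)]),
        (forall j : 'I_m, forall a : 'I_m -> F,
           in_boundaries d (cplx D) (\sum_(i | i != j) a i *: C i) ->
           forall i, i != j -> a i = 0) &
        (exists2 a : 'I_m -> F, (exists i, a i != 0) &
           in_boundaries d (cplx D) (\sum_i a i *: C i))].
Proof.
move=> d1 [[Zch Zbd] Znz Zsimple] DZ ncomp m1.
set A := supp Z :\: D.
set e := facet_rel_del d Z D.
have inA s : (s \in A) = (s \notin D) && (Z s != 0) by rewrite !inE.
have esy : symmetric e.
  move=> s t; rewrite /e /facet_rel_del setIC [s == t]eq_sym.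
  by rewrite andbCA.
have csym := sym_connect_sym esy.
have eA s t : e s t -> (s \in A) && (t \in A) by case/and4P => -> ->.
have closedA : closed e (mem A).
  by move=> s t /eA /andP [-> ->].
set rs := enum (predI (roots e) (mem A)).
have size_rs : size rs = m by rewrite -ncomp -cardE.
pose r (i : 'I_m) := nth set0 rs i.
have rP i : r i \in rs by apply: mem_nth; rewrite size_rs.
have rroot i : fingraph.root e (r i) = r i /\ r i \in A.
  by move: (rP i); rewrite mem_enum inE => /andP [/eqP ? ?].
have rinj i j : r i = r j -> i = j.
  move/eqP; rewrite nth_uniq ?size_rs // ?enum_uniq //.
  by move/eqP/val_inj.
have rootA s : s \in A -> exists k, fingraph.root e s = r k.
  move=> sA.
  have rin : fingraph.root e s \in rs.
    rewrite mem_enum inE /roots root_root // eqxx /=.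
    by rewrite -(closed_connect closedA (connect_root e s)).
  have kl : (index (fingraph.root e s) rs < m)%N by rewrite -size_rs index_mem.
  by exists (Ordinal kl); rewrite /r /= nth_index.
have Zsz s : Z s != 0 -> #|s| = d.+1 := Zch s.
have adj s s' (v v' : 'I_n) : s \in A -> s' \in A -> v \in s -> v' \in s' ->
    s :\ v = s' :\ v' -> fingraph.root e s = fingraph.root e s'.
  move=> sA s'A vs v's E.
  have [->//|ne] := eqVneq s s'.
  apply/(fingraph.rootP csym)/connect1.
  have Zs : Z s != 0 by move: sA; rewrite inA => /andP [].
  have Zs' : Z s' != 0 by move: s'A; rewrite inA => /andP [].
  have cs := Zsz s Zs; have cs' := Zsz s' Zs'.
  have ct : #|s :\ v| = d by move: cs; rewrite (cardsD1 v s) vs add1n => -[].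
  have sub1 : s :\ v \subset s :&: s'.
    by rewrite subsetI subD1set E subD1set.
  have le1 := subset_leq_card sub1; rewrite ct in le1.
  have le2 : (#|s :&: s'| <= d)%N.
    rewrite leqNgt; apply/negP => H.
    have : s :&: s' == s by rewrite eqEcard subsetIl /=; apply: leq_trans H; rewrite cs.
    move/eqP/setIidPl => ss'.
    have : s == s' by rewrite eqEcard; apply/andP; split; [exact: ss' | rewrite cs cs'].
    by move/eqP=> E2; move: ne; rewrite E2 eqxx.
  rewrite /e /facet_rel_del sA s'A ne /=.
  by rewrite eqn_leq le1 le2.
pose Zc (i : 'I_m) : chain F n :=
  [ffun s => if (s \in A) && (fingraph.root e s == r i) then Z s else 0].
have Zc_rk i k : Zc i (r k) = if i == k then Z (r k) else 0.
  rewrite ffunE; have [rr rA] := rroot k; rewrite rA rr /=.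
  have [->|ik] := eqVneq i k; first by rewrite eqxx.
  case: eqP => // /rinj ki; by rewrite ki eqxx in ik.
have Zc_nz i s : Zc i s != 0 -> [/\ s \in A, fingraph.root e s = r i & Z s != 0].
  rewrite ffunE; case: ifP => [/andP [sA /eqP ->] ->|]; last by rewrite eqxx.
  by [].
pose C i := bd (Zc i).
have Csupp i t : C i t != 0 -> exists (s : {set 'I_n}) (v : 'I_n),
    [/\ v \in s, s :\ v = t, s \in A, fingraph.root e s = r i & Z s != 0].
  move/bd_supp => [s [v [vs svt /Zc_nz [sA rs' Zs]]]].
  by exists s, v.
have BD (B : chain F n) s : is_dchain d B -> supported_on B (cplx D) ->
    B s != 0 -> s \in D.
  move=> Bch Bsupp Bs.
  have : s \in cplx D by apply: (subsetP Bsupp); rewrite inE.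
  rewrite inE => /existsP [u /andP [uD su]].
  have Zu : Z u != 0 by move: (subsetP DZ u uD); rewrite inE.
  have : s == u.
    by rewrite eqEcard su /= (Zsz u Zu) (Bch s Bs).
  by move/eqP ->.
exists C; split.
- move=> i; split; last first.
    apply/subsetP => t; rewrite inE => Ct.
    have [//|N] := boolP (t \in cplx D).
    have [s [v [vs svt sA rsi Zs]]] := Csupp i t Ct.
    exfalso; move/negP: Ct; apply.
    have : bd (Z - Zc i) t = 0.
      rewrite bdE; apply: big1 => s' _.
      have [Ex|Nx] := boolP [exists v' : 'I_n, (v' \in s') && (s' :\ v' == t)];
        last first.
        rewrite big1 ?mul0r // => v' /andP [v's s't].
        by move/negP: Nx; case; apply/existsP; exists v'; rewrite v's s't.
      move: Ex => /existsP [v' /andP [v's /eqP s't]].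
      rewrite /Zc !ffunE.
      have [Zs'|Zs'] := eqVneq (Z s') 0.
        by rewrite Zs' if_same subrr mulr0.
      have s'D : s' \notin D.
        apply/negP => s'D; move/negP: N; apply; rewrite inE.
        by apply/existsP; exists s'; rewrite s'D -s't subD1set.
      have s'A : s' \in A by rewrite inA s'D Zs'.
      have := adj s s' v v' sA s'A vs v's; rewrite svt s't => /(_ erefl) rr.
      by rewrite s'A -rr rsi eqxx /= subrr mulr0.
    by rewrite bdB Zbd sub0r ffunE => /eqP; rewrite oppr_eq0 => /eqP ->.
  split; last exact: bdbd.
  move=> t Ct; have [s [v [vs svt _ _ Zs]]] := Csupp i t Ct.
  move: (Zsz s Zs); rewrite (cardsD1 v s) vs svt add1n => -[->].
  by rewrite prednK.
- move=> i j ij; apply/pred0P => t /=; apply/negP => /andP []; rewrite !inE => Ci Cj.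
  have [s [v [vs svt sA rsi _]]] := Csupp i t Ci.
  have [s' [v' [v's s't s'A rsj _]]] := Csupp j t Cj.
  have := adj s s' v v' sA s'A vs v's; rewrite svt s't rsi rsj => /(_ erefl).
  by move/rinj => E; move: ij; rewrite E eqxx.
- move=> j a [B [Bch Bsupp BE]] i ij.
  pose W := \sum_(k | k != j) a k *: Zc k - B.
  have WE s : W s = \sum_(k | k != j) a k * Zc k s - B s.
    rewrite /W !ffunE sum_ffunE; congr (_ - _).
    by apply: eq_bigr => k _; rewrite ffunE.
  have W0 s : Z s = 0 -> W s = 0.
    move=> Zs; rewrite WE big1 ?sub0r; last first.
      by move=> k _; rewrite /Zc ffunE Zs if_same mulr0.
    have [Bs|Bs] := eqVneq (B s) 0; first by rewrite Bs oppr0.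
    by have := subsetP DZ s (BD B s Bch Bsupp Bs); rewrite inE Zs eqxx.
  have Wcyc : is_dcycle d W.
    split.
      move=> s Ws; have [Zs|Zs] := eqVneq (Z s) 0; last exact: Zsz.
      by rewrite W0 ?eqxx in Ws.
    rewrite /W bdB bd_sum BE.
    by under eq_bigr do rewrite bdZ; rewrite subrr.
  have Wsub : supp W \subset supp Z.
    apply/subsetP => s; rewrite !inE => Ws; apply/eqP => Zs.
    by rewrite W0 ?eqxx in Ws.
  have [c Wc] := Zsimple W Wcyc Wsub.
  have Brk k : B (r k) = 0.
    have [//|Bs] := eqVneq (B (r k)) 0.
    have := BD B _ Bch Bsupp Bs; have [_] := rroot k.
    by rewrite inA => /andP [/negPf ->].
  have Wrk k : W (r k) = (if k != j then a k * Z (r k) else 0) + 0.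
    rewrite WE Brk subr0; under eq_bigr do rewrite Zc_rk.
    rewrite big_mkcond (bigD1 k) //= eqxx; congr (_ + _).
    apply: big1 => l lk; rewrite (negPf lk) mulr0; by case: ifP.
  have Zr k : Z (r k) != 0.
    by have [_] := rroot k; rewrite inA => /andP [].
  have Wf k : W (r k) = c * Z (r k) by rewrite Wc ffunE.
  have c0 : c = 0.
    have := Wf j; rewrite Wrk eqxx /= add0r => /esym /eqP.
    by rewrite mulf_eq0 (negPf (Zr j)) orbF => /eqP.
  have := Wf i; rewrite Wrk ij addr0 c0 mul0r => /eqP.
  by rewrite mulf_eq0 (negPf (Zr i)) orbF => /eqP.
- exists (fun _ => 1).
    have m0 : (0 < m)%N by apply: ltnW.
    by exists (Ordinal m0); exact: oner_neq0.
  pose ZD : chain F n := [ffun s => if s \in D then Z s else 0].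
  exists (- ZD); split.
  + move=> s; rewrite !ffunE oppr_eq0; case: ifP => sD; first exact: Zsz.
    by rewrite eqxx.
  + apply/subsetP => s; rewrite !inE !ffunE oppr_eq0.
    case: ifP => sD; last by rewrite eqxx.
    by move=> _; apply/existsP; exists s; rewrite sD subxx.
  + have sumZ : \sum_i Zc i + ZD = Z.
      apply/ffunP => s; rewrite !ffunE sum_ffunE /Zc.
      case sA: (s \in A).
        have sD : s \notin D by move: sA; rewrite inA => /andP [].
        rewrite (negPf sD) addr0.
        have [k rk] := rootA s sA.
        rewrite (bigD1 k) //= !ffunE sA rk eqxx /= big1 ?addr0 // => l lk.
        rewrite ffunE sA rk /=; case: eqP => // /rinj E.
        by move: lk; rewrite E eqxx.
      rewrite big1 ?add0r => [|l _]; last by rewrite ffunE sA.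
      case: ifP => // sD; move: sA; rewrite inA sD /= => /negbFE /eqP ->.
      by [].
    under eq_bigr do rewrite scale1r.
    rewrite bdN /C -bd_sum.
    rewrite (_ : \sum_i Zc i = Z - ZD); first by rewrite bdB Zbd sub0r.
    by rewrite -sumZ addrK.
Qed.
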